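(* Let $\mathcal C\subseteq\mathbb F_2^n$ be a binary linear code, $\sigma\in S_n$, and $\prec$ an admissible order on $[X]$ with $x_1\prec\dots\prec x_n$. Let $G$ be the reduced basis of $\mathcal C$ (output of Algorithm R for $\mathcal C$ with $<_e$ built from $\prec$). Define the admissible order $\prec^\sigma$ by $u\prec^\sigma v$ iff $\sigma^{-1}(u)\prec\sigma^{-1}(v)$ (so $x_{\sigma(1)}\prec^\sigma\dots\prec^\sigma x_{\sigma(n)}$). Then $\sigma(G)$ is the reduced basis of $\sigma(\mathcal C)$ with respect to the error-vector order built from $\prec^\sigma$, i.e. it is the output $G$ of Algorithm R for $\sigma(\mathcal C)$ and that order.
   Context: Binary setting: $[X]$ is the free commutative monoid on $X=\{x_1,\dots,x_n\}$; $\psi(\prod x_i^{\beta_i})=(\beta_i\bmod 2)_i\in\mathbb F_2^n$; a code of dimension $k$ has a parity check matrix $H$ ($n\times(n-k)$, code $=\{c:cH=0\}$); syndrome $\xi(w)=\psi(w)H$ (with the parity check matrix of the code under consideration). $\mathrm{Ind}(w)=\{i:x_i\mid w\}$. For an admissible order $\prec$, the error-vector order is $u<_e w$ iff $|\mathrm{Ind}(u)|<|\mathrm{Ind}(w)|$, or equality and $u\prec w$. For $\sigma\in S_n$: $\sigma((y_i)_i)=(y_{\sigma^{-1}(i)})_i$, $\sigma(\mathcal C)=\{\sigma(c):c\in\mathcal C\}$, on $[X]$ $\sigma$ is the automorphism $x_i\mapsto x_{\sigma(i)}$, and on a set of binomials it acts termwise. Algorithm R (for a code and an error-vector order $<_e$):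 keep a list $L$ sorted increasingly by $<_e$, a set $N$ and a set $G$ of binomials; initially $L=(1)$, $N=G=\emptyset$. While $L\ne\emptyset$: remove the $<_e$-smallest $w$; if $w$ is divisible by the leading word of some binomial in $G$, discard it; otherwise, if some $w'\in N$ has $\xi(w')=\xi(w)$, add $w-w'$ to $G$ (leading word $w$); else add $w$ to $N$ and insert all $wx$ ($x\in X$) into $L$. Output $(N,G)$; $G$ is the reduced basis. *)

(* Defs.v *)
From mathcomp Require Import all_boot all_order all_algebra all_fingroup.
Set Implicit Arguments. Unset Strict Implicit. Unset Printing Implicit Defensive.
Import GRing.Theory.
Local Open Scope ring_scope.

(* Monomials of [X] = free commutative monoid on x_1..x_n, as exponent vectors. *)
Definition mon (n : nat) := {ffun 'I_n -> nat}.

Definition mone n : mon n := [ffun => 0%N].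
Definition mmul n (u v : mon n) : mon n := [ffun i => (u i + v i)%N].
Definition mvar n (i : 'I_n) : mon n := [ffun j => nat_of_bool (j == i)].
Definition mdivides n (u w : mon n) : bool := [forall i, (u i <= w i)%N].
Definition Ind n (w : mon n) : {set 'I_n} := [set i | (0 < w i)%N].

Definition admissible n (prec : rel (mon n)) : Prop :=
  [/\ irreflexive prec,
      transitive prec,
      (forall u v, u != v -> prec u v || prec v u),
      (forall u, u != mone n -> prec (mone n) u) &
      (forall u v w, prec u v -> prec (mmul u w) (mmul v w))].

Definition evorder n (prec : rel (mon n)) : rel (mon n) := fun u w =>
  (#|Ind u| < #|Ind w|)%N || ((#|Ind u| == #|Ind w|) && prec u w).

Definition psi n (w : mon n) : 'rV['F_2]_n := \row_i ((w i)%:R).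
Definition syndrome n m (H : 'M['F_2]_(n, m)) (w : mon n) : 'rV['F_2]_m :=
  psi w *m H.

(* Permutation actions: sigma((y_i)_i) = (y_{sigma^-1 i})_i ;
   on monomials x_i |-> x_{sigma i}; on binomials termwise. *)
Definition permv n (s : 'S_n) (y : 'rV['F_2]_n) : 'rV['F_2]_n :=
  \row_i y 0 ((s^-1)%g i).
Definition permcode n (s : 'S_n) (C : {vspace 'rV['F_2]_n}) : {set 'rV['F_2]_n} :=
  [set permv s c | c in C].
Definition permm n (s : 'S_n) (w : mon n) : mon n := [ffun i => w ((s^-1)%g i)].
Definition permbin n (s : 'S_n) (b : mon n * mon n) : mon n * mon n :=
  (permm s b.1, permm s b.2).
Definition permorder n (s : 'S_n) (prec : rel (mon n)) : rel (mon n) :=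
  fun u v => prec (permm (s^-1)%g u) (permm (s^-1)%g v).

(* A binomial w - w' is stored as the pair (w, w'); its leading word is w. *)
Definition Rstate n := (seq (mon n) * seq (mon n) * seq (mon n * mon n))%type.

Definition Rinit n : Rstate n := ([:: mone n], [::], [::]).

Definition seqmin T (lt : rel T) (a : T) (s : seq T) : T :=
  foldr (fun x m => if lt x m then x else m) a s.

Definition Rstep n m (H : 'M['F_2]_(n, m)) (elt : rel (mon n)) (st : Rstate n)
  : Rstate n :=
  let: (L, N, G) := st in
  match L with
  | [::] => st
  | a :: s =>
    let w := seqmin elt a s in
    let L' := rem w L in
    if has (fun b => mdivides b.1 w) G then (L', N, G)
    else match [seq w' <- N | syndrome H w' == syndrome H w] with
         | w' :: _ => (L', N, rcons G (w, w'))
         | [::] => (undup (L' ++ [seq mmul w (mvar i) | i <- enum 'I_n]),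
                    rcons N w, G)
         end
  end.

Definition R_output n m (H : 'M['F_2]_(n, m)) (elt : rel (mon n))
  (G : seq (mon n * mon n)) : Prop :=
  exists k N G0, iter k (Rstep H elt) (Rinit n) = ([::], N, G0) /\ G0 =i G.

(* Main.v *)
Require Import Defs.
From mathcomp Require Import all_boot all_order all_algebra all_fingroup.
Set Implicit Arguments. Unset Strict Implicit. Unset Printing Implicit Defensive.
Import GRing.Theory.

Section Aux.
Variable n : nat.
Implicit Types (u v w : mon n) (s : 'S_n).

Lemma permmK (s : 'S_n) : cancel (permm s) (permm (s^-1)%g).
Proof. by move=> u; apply/ffunP=> i; rewrite !ffunE invgK permK. Qed.

Lemma permmKV (s : 'S_n) : cancel (permm (s^-1)%g) (permm s).
Proof. by move=> u; apply/ffunP=> i; rewrite !ffunE invgK permKV. Qed.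

Lemma permm_mul s u v : permm s (mmul u v) = mmul (permm s u) (permm s v).
Proof. by apply/ffunP=> i; rewrite !ffunE. Qed.

Lemma permm_var s (i : 'I_n) : permm s (mvar i) = mvar (s i).
Proof.
apply/ffunP=> j; rewrite !ffunE; congr nat_of_bool.
by apply/eqP/eqP => [<-|->]; rewrite ?permKV ?permK.
Qed.

Lemma permm_one s : permm s (mone n) = mone n.
Proof. by apply/ffunP=> i; rewrite !ffunE. Qed.

Lemma card_Ind_permm s u : #|Ind (permm s u)| = #|Ind u|.
Proof.
have -> : Ind (permm s u) = (s^-1)%g @^-1: Ind u.
  by apply/setP=> i; rewrite !inE ffunE.
by rewrite card_preimset //; apply: perm_inj.
Qed.

Lemma mdivides_permm s u v : mdivides (permm s u) (permm s v) = mdivides u v.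
Proof.
apply/forallP/forallP => h i.
  by have := h (s i); rewrite !ffunE permK.
by rewrite !ffunE; exact: h.
Qed.

Lemma evorder_permm s prec u v :
  evorder (permorder s prec) (permm s u) (permm s v) = evorder prec u v.
Proof. by rewrite /evorder /permorder !card_Ind_permm !permmK. Qed.

Lemma psi_permm s w : psi (permm s w) = permv s (psi w).
Proof. by apply/rowP=> i; rewrite !mxE ffunE. Qed.

Lemma permvK s : cancel (permv s) (permv (s^-1)%g).
Proof. by move=> y; apply/rowP=> i; rewrite !mxE invgK permK. Qed.

Lemma permvB s x y : permv s (x - y)%R = (permv s x - permv s y)%R.
Proof. by apply/rowP=> i; rewrite !mxE. Qed.

Lemma syn_eq m (H : 'M['F_2]_(n, m)) (C : {vspace 'rV['F_2]_n}) u v :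
  (forall c : 'rV['F_2]_n, (c *m H == 0)%R = (c \in C)) ->
  (syndrome H u == syndrome H v) = ((psi u - psi v)%R \in C).
Proof. by move=> HC; rewrite -HC mulmxBl subr_eq0. Qed.

Lemma syn_eqS m (H : 'M['F_2]_(n, m)) (C : {vspace 'rV['F_2]_n}) s u v :
  (forall c : 'rV['F_2]_n, (c *m H == 0)%R = (c \in permcode s C)) ->
  (syndrome H (permm s u) == syndrome H (permm s v)) = ((psi u - psi v)%R \in C).
Proof.
move=> HC; rewrite /syndrome -subr_eq0 -mulmxBl HC !psi_permm -permvB.
apply/imsetP/idP => [[c cC /(can_inj (@permvK s)) ->]|xC] //.
by exists (psi u - psi v)%R.
Qed.

End Aux.

Section Seqmin.
Variables (T : eqType) (lt : rel T).
Hypotheses (irr : irreflexive lt) (tr : transitive lt).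

Lemma seqmin_mem a s : seqmin lt a s \in a :: s.
Proof.
rewrite /seqmin; elim: s => [|y s IH] /=; first by rewrite inE.
case: ifP => _; first by rewrite !inE eqxx orbT.
by move: IH; rewrite !inE => /orP[->|->]; rewrite ?orbT.
Qed.

Lemma seqmin_min a s x : x \in a :: s -> ~~ lt x (seqmin lt a s).
Proof.
move: x; rewrite /seqmin; elim: s => [|y s IH] x /=.
  by rewrite inE => /eqP->; rewrite irr.
have Hx: x \in a :: y :: s -> x = y \/ x \in a :: s.
  rewrite !inE => /or3P[/eqP->|/eqP->|h]; [by right; rewrite eqxx | by left | by right; rewrite h orbT].
move=> /Hx{Hx} [->|xs].
  by case: ifP => hym; rewrite ?irr ?hym.
case: ifP => hym; last exact: IH.
apply/negP=> hxy; have := IH x xs; by rewrite (tr hxy hym).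
Qed.

Lemma seqmin_eq a s y : y \in a :: s ->
  (forall x, x \in a :: s -> x != y -> lt y x) -> seqmin lt a s = y.
Proof.
move=> yin hy; case: (eqVneq (seqmin lt a s) y) => // ne.
have := hy _ (seqmin_mem a s) ne.
by have := seqmin_min yin => /negbTE ->.
Qed.

End Seqmin.

Section Ev.
Variables (n : nat) (prec : rel (mon n)).

Lemma evorder_irr : irreflexive prec -> irreflexive (evorder prec).
Proof. by move=> irr u; rewrite /evorder ltnn eqxx /= irr. Qed.

Lemma evorder_trans : transitive prec -> transitive (evorder prec).
Proof.
move=> tr y x z; rewrite /evorder => /orP[h1|/andP[/eqP e1 p1]] /orP[h2|/andP[/eqP e2 p2]].
- by rewrite (ltn_trans h1 h2).
- by rewrite -e2 h1.
- by rewrite e1 h2.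
- by rewrite e1 e2 eqxx (tr _ _ _ p1 p2) orbT.
Qed.

Lemma evorder_total : (forall u v, u != v -> prec u v || prec v u) ->
  forall u v, u != v -> evorder prec u v || evorder prec v u.
Proof.
move=> tot u v ne; rewrite /evorder.
case: (ltngtP #|Ind u| #|Ind v|) => //= _.
by rewrite ?eqxx /= tot.
Qed.

Lemma permorder_irr s : irreflexive prec -> irreflexive (permorder s prec).
Proof. by move=> irr u; rewrite /permorder irr. Qed.

Lemma permorder_trans s : transitive prec -> transitive (permorder s prec).
Proof. by move=> tr y x z; rewrite /permorder; apply: tr. Qed.

End Ev.

Theorem theorem4p1 (n : nat) (C : {vspace 'rV['F_2]_n}) (s : 'S_n)
  (prec : rel (mon n))
  (H : 'M['F_2]_(n, n - \dim C)) (Hs : 'M['F_2]_(n, n - \dim C))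
  (G : seq (mon n * mon n)) :
  admissible prec ->
  (forall i j : 'I_n, (i < j)%N -> prec (mvar i) (mvar j)) ->
  (forall c : 'rV['F_2]_n, (c *m H == 0)%R = (c \in C)) ->
  (forall c : 'rV['F_2]_n, (c *m Hs == 0)%R = (c \in permcode s C)) ->
  R_output H (evorder prec) G ->
  R_output Hs (evorder (permorder s prec)) (map (permbin s) G).
Proof.
move=> [irr tr tot _ _] _ HC HCs [k [N [G0 [Hit HG0]]]].
set elt := evorder prec; set elt' := evorder (permorder s prec).
set pm := permm s.
have memP : forall (Y : seq (mon n)) x, (x \in map pm Y) = (permm (s^-1)%g x \in Y).
  by move=> Y x; rewrite -{1}(permmKV s x) mem_map //; apply: can_inj (permmK s).
pose rel_st (st st' : Rstate n) := [/\ uniq st.1.1, uniq st'.1.1,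
  st'.1.1 =i map pm st.1.1, st'.1.2 = map pm st.1.2 & st'.2 = map (permbin s) st.2].
have step : forall st st', rel_st st st' -> rel_st (Rstep H elt st) (Rstep Hs elt' st').
  move=> [[L N1] G1] [[L' N1'] G1'] [/= uL uL' eL -> ->].
  rewrite /Rstep.
  case: L uL eL => [|a l] uL eL.
    case: L' uL' eL => [|a' l'] uL' eL; first by split.
    by have := eL a'; rewrite inE eqxx.
  case: L' uL' eL => [|a' l'] uL' eL.
    by have := eL (pm a); rewrite /= inE eqxx.
  set w := seqmin elt a l.
  have wmin : forall x, x \in a :: l -> x != w -> elt w x.
    move=> x xin ne.
    have := evorder_total tot ne; have := seqmin_min (evorder_irr irr) (evorder_trans tr) xin.
    by rewrite -/elt -/w => /negbTE ->.
  have -> : seqmin elt' a' l' = pm w.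
    apply: (@seqmin_eq {ffun 'I_n -> nat} elt' (@evorder_irr _ (permorder s prec) (permorder_irr s irr))
                      (@evorder_trans _ (permorder s prec) (@permorder_trans _ prec s tr))).
      by have := eL (pm w); rewrite map_f ?seqmin_mem // => h; exact: h.
    move=> x; rewrite eL => /mapP[x0 x0in ->] ne.
    rewrite /elt' evorder_permm; apply: wmin => //.
    by apply: contraNneq ne => ->.
  have remE : rem (pm w) (a' :: l') =i map pm (rem w (a :: l)).
    move=> x; rewrite memP (mem_rem_uniq _ uL') (mem_rem_uniq _ uL) [in LHS]inE [in RHS]inE /=.
    rewrite eL memP.
    by rewrite -{1}(permmKV s x) (can_eq (permmK s)).
  have -> : has (fun b => mdivides b.1 (pm w)) (map (permbin s) G1) =
            has (fun b => mdivides b.1 w) G1.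
    by rewrite has_map; apply: eq_has => b /=; rewrite mdivides_permm.
  case: ifP => _.
    split; [exact: (rem_uniq _ uL) | exact: (rem_uniq _ uL') | exact: remE | done | done].
  rewrite filter_map.
  have -> : [seq x <- N1 | preim pm (fun w' => syndrome Hs w' == syndrome Hs (pm w)) x]
          = [seq x <- N1 | syndrome H x == syndrome H w].
    by apply: eq_filter => x /=; rewrite (syn_eqS _ _ HCs) (syn_eq _ _ HC).
  case: [seq x <- N1 | _] => [|w' rest].
    split; rewrite /= ?undup_uniq ?map_rcons //.
    move=> x; rewrite memP !mem_undup !mem_cat remE memP; congr orb.
    apply/mapP/mapP => [[i _ ->]|[i _ e]].
      exists ((s^-1)%g i); first by rewrite mem_enum.
      by rewrite permm_mul permm_var permmK.
    exists (s i); first by rewrite mem_enum.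
    by rewrite -(permmKV s x) e permm_mul permm_var.
  split; [exact: (rem_uniq _ uL) | exact: (rem_uniq _ uL') | exact: remE | done | by rewrite /= map_rcons].
have : rel_st (iter k (Rstep H elt) (Rinit n)) (iter k (Rstep Hs elt') (Rinit n)).
  elim: k {Hit} => [|k IH]; last by rewrite !iterS; apply: step.
  by split => //= x; rewrite /pm permm_one.
rewrite Hit; case E: (iter k (Rstep Hs elt') (Rinit n)) => [[L' N'] G'] [/= _ _ eL _ G'E].
have L'0 : L' = [::].
  by case: L' eL {E} => // a l eL; have := eL a; rewrite inE eqxx.
exists k, N', G'; split; first by rewrite E L'0.
by rewrite G'E; apply: eq_mem_map.
Qed.
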